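(* Let $q$ be a prime power, $\mathbb{F}_q$ the finite field with $q$ elements, and let $d$ and $k$ be fixed positive integers with $d \geqslant 2k-1$. Let $E \subset \mathbb{F}_q^d$ be such that $$|E| \gg q^{\frac{d}{2} + k - 1}.$$ Then the number of $k$-tuples of $k$ mutually orthogonal vectors in $E$ is $$(1 + o(1)) \frac{|E|^k}{k!}\, q^{-\binom{k}{2}}.$$
   Context: Two vectors $x=(x_1,\dots,x_d)$ and $y=(y_1,\dots,y_d)$ in $\mathbb{F}_q^d$ are orthogonal if $x_1y_1+\cdots+x_dy_d=0$. A ''$k$-tuple of $k$ mutually orthogonal vectors in $E$'' means an unordered collection of $k$ distinct vectors of $E$ that are pairwise orthogonal (hence the division by $k!$). Asymptotic notation is with $d,k$ fixed and $q\to\infty$: $|E| \gg f(q)$ means $|E|/f(q)\to\infty$, and $o(1)$ denotes a quantity tending to $0$. *)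

(* Defs.v *)
From HB Require Import structures.
From mathcomp Require Import all_boot all_order all_algebra all_field.
Set Implicit Arguments. Unset Strict Implicit. Unset Printing Implicit Defensive.
Import Order.TTheory GRing.Theory Num.Theory.
Local Open Scope ring_scope.

Definition dotv (F : finFieldType) (d : nat) (x y : 'rV[F]_d) : F :=
  \sum_(i < d) x ord0 i * y ord0 i.

Definition orthov (F : finFieldType) (d : nat) (x y : 'rV[F]_d) : bool :=
  dotv x y == 0.

Definition num_orth_ktuples (F : finFieldType) (d : nat)
    (E : {set 'rV[F]_d}) (k : nat) : nat :=
  #|[set S : {set 'rV[F]_d} | [&& S \subset E, #|S| == k &
      [forall x in S, forall y in S, (x != y) ==> orthov x y]]]|%N.

(* Main.v *)
Require Import Defs.
From HB Require Import structures.
From mathcomp Require Import all_boot all_order all_algebra all_field.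
From mathcomp Require Import ring lra.
Set Implicit Arguments. Unset Strict Implicit. Unset Printing Implicit Defensive.
Import Order.TTheory GRing.Theory Num.Theory.
Local Open Scope ring_scope.

Lemma powdiff (R : rcfType) (a b s : R) n :
  0 <= a -> 0 <= b -> a <= s -> b <= s ->
  `|a ^+ n.+1 - b ^+ n.+1| <= n.+1%:R * `|a - b| * s ^+ n.
Proof.
move=> a0 b0 as_ bs; elim: n => [|n IH]; first by rewrite !expr1 expr0 mulr1 mul1r.
have s0 : 0 <= s by apply: le_trans as_.
have -> : a ^+ n.+2 - b ^+ n.+2 = a * (a ^+ n.+1 - b ^+ n.+1) + (a - b) * b ^+ n.+1.
  by rewrite !exprS; ring.
apply: (le_trans (ler_normD _ _)); rewrite !normrM (ger0_norm a0) (ger0_norm (exprn_ge0 _ b0)).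
have h1 : a * `|a ^+ n.+1 - b ^+ n.+1| <= s * (n.+1%:R * `|a - b| * s ^+ n).
  apply: ler_pM => //; exact: normr_ge0.
have h2 : `|a - b| * b ^+ n.+1 <= `|a - b| * s ^+ n.+1.
  by apply: ler_wpM2l; [exact: normr_ge0| apply: lerXn2r].
have -> : n.+2%:R * `|a - b| * s ^+ n.+1 = s * (n.+1%:R * `|a - b| * s ^+ n) + `|a - b| * s ^+ n.+1.
  by rewrite -[n.+2]addn1 natrD exprS; ring.
exact: lerD.
Qed.

Lemma pow2bound (R : rcfType) (a b : R) n :
  0 <= a -> 0 <= b -> (a + b) ^+ n <= 2 ^+ n * (a ^+ n + b ^+ n).
Proof.
wlog ab : a b / a <= b.
  move=> H a0 b0; case: (leP a b) => [ab|ba]; first exact: H.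
  by rewrite addrC (addrC (a ^+ n)); apply: H => //; apply: ltW.
move=> a0 b0.
have : (a + b) ^+ n <= (2 * b) ^+ n.
  apply: lerXn2r; rewrite ?nnegrE ?addr_ge0 ?mulr_ge0 //; lra.
rewrite exprMn => h; apply: (le_trans h); apply: ler_wpM2l; first exact: exprn_ge0.
rewrite lerDr; exact: exprn_ge0.
Qed.

Lemma sL1 (R : rcfType) (s L : R) n : 0 <= s -> 0 <= L -> s * (s + L) ^+ n <= (s + L) ^+ n.+1.
Proof. move=> s0 L0; rewrite exprS ler_wpM2r ?exprn_ge0 ?addr_ge0 //; lra. Qed.

Lemma sL2 (R : rcfType) (s L : R) n : 0 <= s -> 0 <= L -> L * s ^+ n <= (s + L) ^+ n.+1.
Proof.
move=> s0 L0; rewrite exprS; apply: ler_pM => //; first exact: exprn_ge0; first lra.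
apply: lerXn2r; rewrite ?nnegrE ?addr_ge0 //; lra.
Qed.

Lemma sL3 (R : rcfType) (s L : R) n : 0 <= s -> 0 <= L -> s ^+ n <= (s + L) ^+ n.
Proof. move=> s0 L0; apply: lerXn2r; rewrite ?nnegrE ?addr_ge0 //; lra. Qed.

Lemma step (R : rcfType) (I : finType) (E : {set I}) (q La c : R) (n : nat) (t X : I -> R) :
  1 <= q -> 0 <= La -> 0 <= c ->
  (forall x, x \in E -> 0 <= t x <= #|E|%:R) ->
  \sum_(x in E) `|t x - #|E|%:R / q| <= La * #|E|%:R ->
  (forall x, x \in E -> `|X x - t x ^+ n.+1| <= c * (La * q ^+ n) * (t x + La * q ^+ n) ^+ n) ->
  `|q ^+ n.+1 * \sum_(x in E) X x - #|E|%:R ^+ n.+2|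
     <= (n.+1%:R + c * 2 ^+ n.+1) * (La * q ^+ n.+1) * (#|E|%:R + La * q ^+ n.+1) ^+ n.+1.
Proof.
move=> q1 La0 c0 tb hm hX.
set s := (#|E|%:R : R); set u := s / q; set Lm := La * q ^+ n.+1.
have q0 : 0 < q by lra.
have qn0 : q != 0 by rewrite gt_eqF.
have s0 : 0 <= s by rewrite /s ler0n.
have u0 : 0 <= u by rewrite /u divr_ge0 // ltW.
have us : u <= s by rewrite /u ler_pdivrMr // ler_peMr.
have Lm0 : 0 <= Lm by rewrite /Lm mulr_ge0 // exprn_ge0 // ltW.
have tus : forall x, x \in E -> `|t x - u| <= s.
  move=> x /tb /andP [h1 h2]; rewrite ler_norml; apply/andP; split; lra.
have sumu : \sum_(x in E) u ^+ n.+1 = s * u ^+ n.+1 by rewrite sumr_const mulr_natl.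
have e : q ^+ n.+1 * (s * u ^+ n.+1) = s ^+ n.+2.
  by rewrite /u exprMn exprVn !exprS; field; rewrite expf_neq0.
have -> : q ^+ n.+1 * \sum_(x in E) X x - s ^+ n.+2 =
   q ^+ n.+1 * \sum_(x in E) (X x - t x ^+ n.+1) + q ^+ n.+1 * \sum_(x in E) (t x ^+ n.+1 - u ^+ n.+1).
  by rewrite !sumrB sumu -e; ring.
have qn : 0 <= q ^+ n.+1 by rewrite exprn_ge0 // ltW.
apply: (le_trans (ler_normD _ _)); rewrite !normrM (ger0_norm qn).
rewrite mulrDl mulrDl addrC; apply: lerD.
-
  have h : \sum_(x in E) `|t x ^+ n.+1 - u ^+ n.+1| <= n.+1%:R * s ^+ n * (La * s).
    apply: le_trans (_ : \sum_(x in E) n.+1%:R * s ^+ n * `|t x - u| <= _).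
      apply: ler_sum => x xE; have /andP [t0 ts] := tb x xE.
      by rewrite mulrAC powdiff.
    by rewrite -mulr_sumr; apply: ler_wpM2l => //; rewrite mulr_ge0 // exprn_ge0.
  apply: (le_trans (ler_wpM2l qn (le_trans (ler_norm_sum _ _ _) h))).
  have : q ^+ n.+1 * (n.+1%:R * s ^+ n * (La * s)) = n.+1%:R * Lm * s ^+ n.+1.
    by rewrite /Lm !exprS; ring.
  move=> ->; apply: ler_wpM2l; rewrite ?mulr_ge0 //; exact: sL3.
-
  set A := u + La * q ^+ n.
  have A0 : 0 <= A by rewrite /A addr_ge0 // mulr_ge0 // exprn_ge0 // ltW.
  have h1 : \sum_(x in E) `|X x - t x ^+ n.+1|
       <= c * (La * q ^+ n) * (2 ^+ n * (s * A ^+ n + \sum_(x in E) `|t x - u| ^+ n)).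
    apply: le_trans (_ : \sum_(x in E) c * (La * q ^+ n) * (2 ^+ n * (A ^+ n + `|t x - u| ^+ n)) <= _).
      apply: ler_sum => x xE; apply: (le_trans (hX x xE)); apply: ler_wpM2l.
        by rewrite mulr_ge0 // mulr_ge0 // exprn_ge0 // ltW.
      have /andP [t0 _] := tb x xE.
      apply: le_trans (pow2bound n A0 (normr_ge0 (t x - u))).
      have Lq0 : 0 <= La * q ^+ n by rewrite mulr_ge0 // exprn_ge0 // ltW.
      apply: lerXn2r; rewrite ?nnegrE ?addr_ge0 ?normr_ge0 //.
      rewrite /A; have := ler_norm (t x - u); lra.
    rewrite -mulr_sumr; apply: ler_wpM2l; first by rewrite ?mulr_ge0 ?exprn_ge0 // ?ltW.
    rewrite -mulr_sumr; apply: ler_wpM2l; first by rewrite exprn_ge0. by rewrite big_split /= sumr_const mulr_natl.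
  have h2 : q ^+ n * \sum_(x in E) `|t x - u| ^+ n <= (s + Lm) ^+ n.+1.
    destruct n as [|k].
      rewrite expr0 mul1r (eq_bigr (fun _ => 1)); last by move=> x _; rewrite expr0.
      by rewrite sumr_const expr1 /s -mulr_natl mulr1 lerDl mulr_ge0 // exprn_ge0 // ltW.
    apply: le_trans (_ : q ^+ k.+1 * (s ^+ k * (La * s)) <= _).
      apply: ler_wpM2l; first by rewrite ?exprn_ge0 ?ltW.
      apply: le_trans (_ : \sum_(x in E) s ^+ k * `|t x - u| <= _); last by rewrite -mulr_sumr; apply: ler_wpM2l; rewrite ?exprn_ge0.
      apply: ler_sum => x xE; rewrite exprSr; apply: ler_wpM2r => //; apply: lerXn2r; rewrite ?nnegrE //; exact: tus.
    apply: le_trans (sL2 k.+1 s0 Lm0).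
    rewrite /Lm.
    have -> : q ^+ k.+1 * (s ^+ k * (La * s)) = La * q ^+ k.+1 * s ^+ k.+1 by rewrite [s ^+ k.+1]exprSr; ring.
    apply: ler_wpM2r; rewrite ?exprn_ge0 //; apply: ler_wpM2l => //; by rewrite [q ^+ k.+2]exprS ler_peMl // exprn_ge0 // ltW.
  apply: (le_trans (ler_wpM2l qn (le_trans (ler_norm_sum _ _ _) h1))).
  have qA : q ^+ n * A ^+ n = (s + Lm) ^+ n.
    rewrite -exprMn /A /u /Lm exprS; congr (_ ^+ _); field; exact: qn0.
  have -> : q ^+ n.+1 * (c * (La * q ^+ n) * (2 ^+ n * (s * A ^+ n + \sum_(x in E) `|t x - u| ^+ n)))
     = c * 2 ^+ n * Lm * (s * (q ^+ n * A ^+ n) + q ^+ n * \sum_(x in E) `|t x - u| ^+ n).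
    by rewrite /Lm !exprS; ring.
  have h3 : s * (s + Lm) ^+ n + q ^+ n * \sum_(x in E) `|t x - u| ^+ n <= 2 * (s + Lm) ^+ n.+1.
    by rewrite mulrDl mul1r; apply: lerD => //; exact: sL1.
  apply: le_trans (_ : c * 2 ^+ n * Lm * (2 * (s + Lm) ^+ n.+1) <= _).
    apply: ler_wpM2l; first by apply: mulr_ge0 => //; apply: mulr_ge0 => //; exact: exprn_ge0.
    by rewrite qA.
  rewrite [2 ^+ n.+1]exprS; set P := (s + Lm) ^+ n.+1; have -> : c * 2 ^+ n * Lm * (2 * P) = c * (2 * 2 ^+ n) * Lm * P by ring. by [].
Qed.
Lemma dotvC (F : finFieldType) d (x y : 'rV[F]_d) : dotv x y = dotv y x.
Proof. by apply: eq_bigr => i _; rewrite mulrC. Qed.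

Lemma dotvDl (F : finFieldType) d (x y z : 'rV[F]_d) : dotv (x + y) z = dotv x z + dotv y z.
Proof. by rewrite /dotv -big_split /=; apply: eq_bigr => i _; rewrite mxE mulrDl. Qed.

Lemma dotvZl (F : finFieldType) d (c : F) (x z : 'rV[F]_d) : dotv (c *: x) z = c * dotv x z.
Proof. by rewrite /dotv mulr_sumr; apply: eq_bigr => i _; rewrite mxE mulrA. Qed.

Lemma dotvBl (F : finFieldType) d (x y z : 'rV[F]_d) : dotv (x - y) z = dotv x z - dotv y z.
Proof. by rewrite dotvDl -scaleN1r dotvZl mulN1r. Qed.

Lemma dotvZr (F : finFieldType) d (c : F) (x z : 'rV[F]_d) : dotv x (c *: z) = c * dotv x z.
Proof. by rewrite dotvC dotvZl dotvC. Qed.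

Lemma dotv0r (F : finFieldType) d (x : 'rV[F]_d) : dotv x 0 = 0.
Proof. by rewrite -(scale0r 0) dotvZr mul0r. Qed.

Lemma dotv0l (F : finFieldType) d (x : 'rV[F]_d) : dotv 0 x = 0.
Proof. by rewrite dotvC dotv0r. Qed.

Lemma dotv_delta (F : finFieldType) d (j : 'I_d) (y : 'rV[F]_d) :
  dotv (delta_mx ord0 j) y = y ord0 j.
Proof.
rewrite /dotv (bigD1 j) //= big1 => [|i /negbTE nij]; first by rewrite mxE !eqxx mul1r addr0.
by rewrite mxE nij andbF mul0r.
Qed.

Lemma nz_coord (F : finFieldType) d (y : 'rV[F]_d) : y != 0 -> exists i, y ord0 i != 0.
Proof.
move=> ny; apply/existsP; apply: contraR ny; rewrite negb_exists => /forallP h.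
apply/eqP/rowP => i; rewrite mxE; exact/eqP/negPn/h.
Qed.

Lemma exists_w1 (F : finFieldType) d (y : 'rV[F]_d) : y != 0 -> exists w, dotv w y = 1.
Proof.
move=> /nz_coord [i yi]; exists ((y ord0 i)^-1 *: delta_mx ord0 i).
by rewrite dotvZl dotv_delta mulVf.
Qed.

Lemma card_F_gt0 (F : finFieldType) : (0 < #|F|)%N.
Proof. by apply/card_gt0P; exists 0. Qed.

Lemma transl (R : rcfType) (F : finFieldType) d (y w : 'rV[F]_d) (h : 'rV[F]_d -> R) :
  dotv w y = 1 -> (forall x (c : F), h (x + c *: w) = h x) ->
  \sum_x (((dotv x y == 0)%:R - (#|F|%:R : R)^-1) * h x) = 0.
Proof.
move=> wy hinv.
have q0 : (#|F|%:R : R) != 0 by rewrite pnatr_eq0 -lt0n card_F_gt0.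
set G := fun x => (((dotv x y == 0)%:R - (#|F|%:R : R)^-1) * h x).
have e1 : forall c : F, \sum_x G x = \sum_x G (x + c *: w).
  by move=> c; rewrite (reindex_inj (addIr (c *: w))).
have e2 : forall x, \sum_(c : F) G (x + c *: w) = 0.
  move=> x; rewrite /G (eq_bigr (fun c => ((dotv x y + c == 0)%:R - (#|F|%:R : R)^-1) * h x)); last first.
    by move=> c _; rewrite hinv dotvDl dotvZl wy mulr1.
  rewrite -mulr_suml sumrB sumr_const -[(_)^-1 *+ _]mulr_natr mulVf //.
  rewrite (bigD1 (- dotv x y)) //= addrN eqxx big1 ?addr0 ?subrr ?mul0r // => c nc.
  by rewrite addrC addr_eq0 (negbTE nc).
apply: (mulfI q0); rewrite mulr0.
have -> : #|F|%:R * \sum_x G x = \sum_(c : F) \sum_x G (x + c *: w).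
  by rewrite -(eq_bigr _ (fun c _ => e1 c)) sumr_const mulr_natl.
by rewrite exchange_big /= big1 // => x _; exact: e2.
Qed.

Definition aa (R : rcfType) (F : finFieldType) d (x y : 'rV[F]_d) : R :=
  (dotv x y == 0)%:R - (#|F|%:R)^-1.
Definition KK (R : rcfType) (F : finFieldType) d (y z : 'rV[F]_d) : R :=
  \sum_x aa R x y * aa R x z.

Lemma K_sep1 (R : rcfType) (F : finFieldType) d (y z w : 'rV[F]_d) :
  dotv w y = 1 -> dotv w z = 0 -> KK R y z = 0.
Proof.
move=> wy wz; rewrite /KK; apply: transl wy _ => x c.
by rewrite /aa dotvDl dotvZl wz mulr0 addr0.
Qed.

Lemma K_sep2 (R : rcfType) (F : finFieldType) d (y z w : 'rV[F]_d) :
  dotv w y = 0 -> dotv w z = 1 -> KK R y z = 0.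
Proof.
move=> wy wz; rewrite /KK (eq_bigr (fun x => aa R x z * aa R x y)); last by move=> x _; rewrite mulrC.
exact: (K_sep1 R wz wy).
Qed.

Lemma q_neq0 (R : rcfType) (F : finFieldType) : (#|F|%:R : R) != 0.
Proof. by rewrite pnatr_eq0 -lt0n card_F_gt0. Qed.

Lemma q_ge1 (R : rcfType) (F : finFieldType) : 1 <= (#|F|%:R : R).
Proof. by rewrite ler1n card_F_gt0. Qed.

Lemma card_rV (F : finFieldType) d : #|{: 'rV[F]_d}| = (#|F| ^ d)%N.
Proof. by rewrite card_mx mul1n. Qed.

Lemma Kyy_bound (R : rcfType) (F : finFieldType) d (y : 'rV[F]_d) :
  y != 0 -> #|F|%:R * KK R y y <= (#|F|%:R : R) ^+ d.
Proof.
move=> /exists_w1 [w wy].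
have q0 := q_neq0 R F.
have s0 : \sum_x aa R x y = 0.
  by rewrite -[RHS](@transl R F d y w (fun _ => (1 : R)) wy) //; apply: eq_bigr => x _; rewrite mulr1.
have s1 : \sum_x ((dotv x y == 0)%:R : R) = (#|F|%:R)^-1 * #|F|%:R ^+ d.
  move: s0; rewrite /aa sumrB sumr_const card_rV -[_ *+ (_ ^ _)]mulr_natr natrX => /eqP.
  by rewrite subr_eq0 => /eqP ->.
have -> : KK R y y = (1 - (#|F|%:R)^-1) * \sum_x ((dotv x y == 0)%:R : R).
  rewrite /KK (eq_bigr (fun x => (1 - (#|F|%:R)^-1) * ((dotv x y == 0)%:R : R) - (#|F|%:R)^-1 * aa R x y)); last first.
    by move=> x _; rewrite /aa; case: (dotv x y == 0) => /=; ring.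
  by rewrite sumrB -!mulr_sumr s0 mulr0 subr0.
rewrite s1.
have -> : #|F|%:R * ((1 - (#|F|%:R)^-1) * ((#|F|%:R)^-1 * (#|F|%:R : R) ^+ d)) = (1 - (#|F|%:R)^-1) * #|F|%:R ^+ d.
  by field.
have : 0 <= (#|F|%:R : R)^-1 by rewrite invr_ge0 ler0n.
have : 0 <= (#|F|%:R : R) ^+ d by rewrite exprn_ge0 ?ler0n.
move: ((#|F|%:R : R)^-1) ((#|F|%:R : R) ^+ d) => a b b0 a0; nra.
Qed.

Lemma K_scale (R : rcfType) (F : finFieldType) d (y z : 'rV[F]_d) (c : F) :
  c != 0 -> KK R y (c *: z) = KK R y z.
Proof.
move=> c0; rewrite /KK; apply: eq_bigr => x _; rewrite /aa dotvZr mulf_eq0 (negbTE c0) //.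
Qed.

Lemma K_ge0 (R : rcfType) (F : finFieldType) d (y : 'rV[F]_d) : 0 <= KK R y y.
Proof. by rewrite /KK sumr_ge0 // => x _; rewrite -expr2 sqr_ge0. Qed.

Lemma classify (F : finFieldType) d (y z : 'rV[F]_d) : y != 0 ->
  (exists c, c != 0 /\ z = c *: y) \/ (exists w, dotv w y = 1 /\ dotv w z = 0) \/
  (exists w, dotv w y = 0 /\ dotv w z = 1).
Proof.
move=> ny; have [i yi] := nz_coord ny.
set z' := z - (z ord0 i / y ord0 i) *: y.
have [z'0|nz'] := eqVneq z' 0.
  have ez : z = (z ord0 i / y ord0 i) *: y by apply/eqP; rewrite -subr_eq0 -/z' z'0.
  have [c0|nc0] := eqVneq (z ord0 i / y ord0 i) 0.
    right; left; have [w wy] := exists_w1 ny; exists w; split => //.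
    by rewrite ez c0 scale0r dotv0r.
  by left; exists (z ord0 i / y ord0 i).
have [j zj] := nz_coord nz'.
right; right; exists ((z' ord0 j)^-1 *: (delta_mx ord0 j - (y ord0 j / y ord0 i) *: delta_mx ord0 i)).
rewrite !dotvZl !dotvBl !dotvZl !dotv_delta; split.
  by rewrite divfK // subrr mulr0.
have -> : z ord0 j - y ord0 j / y ord0 i * z ord0 i = z' ord0 j.
  by rewrite /z' !mxE; field.
by rewrite mulVf.
Qed.

Lemma sum_in_le (R : rcfType) (I : finType) (E : {set I}) (f g : I -> R) :
  (forall z, z \in E -> f z <= g z) -> (forall z, 0 <= g z) ->
  \sum_(z in E) f z <= \sum_z g z.
Proof.
move=> fg g0; rewrite big_mkcond /=; apply: ler_sum => z _.
by case: ifP => zE; [exact: fg|].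
Qed.

Lemma exists_le_sum (R : rcfType) (I : finType) (P : pred I) :
  ([exists c, P c]%:R : R) <= \sum_c (P c)%:R.
Proof.
case: existsP => [[c Pc]|_]; last by rewrite sumr_ge0.
rewrite (bigD1 c) //= Pc lerDl sumr_ge0 //.
Qed.

Lemma row_bound (R : rcfType) (F : finFieldType) d (E : {set 'rV[F]_d}) (y : 'rV[F]_d) :
  \sum_(z in E) KK R y z <= (#|F|%:R : R) ^+ d.
Proof.
have q0 := q_neq0 R F.
have q1 := q_ge1 R F.
have [->|ny] := eqVneq y 0.
  apply: le_trans (_ : \sum_z (z == 0)%:R * KK R 0 0 <= _).
    apply: sum_in_le => [z _|z]; last by rewrite mulr_ge0 ?K_ge0.
    have [->|nz] := eqVneq z 0; first by rewrite /= mul1r; apply: lexx.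
    have [w wz] := exists_w1 nz; rewrite /= mul0r (K_sep2 R (dotv0r w) wz) //.
  rewrite (bigD1 0) //= eqxx mul1r big1 ?addr0; last by move=> z /negbTE ->; rewrite mul0r.
  rewrite /KK /aa (eq_bigr (fun _ => (1 - (#|F|%:R : R)^-1) ^+ 2)); last first.
    by move=> x _; rewrite dotv0r eqxx expr2.
  rewrite sumr_const card_rV -[_ *+ (_ ^ _)]mulr_natr natrX.
  have : 0 <= (#|F|%:R : R)^-1 <= 1.
    by rewrite invr_ge0 ler0n /= invf_le1 // (lt_le_trans ltr01 q1).
  have : 0 <= (#|F|%:R : R) ^+ d by rewrite exprn_ge0 ?ler0n.
  move: ((#|F|%:R : R)^-1) ((#|F|%:R : R) ^+ d) => a b b0 /andP [a0 a1].
  have : 0 <= (1 - a) ^+ 2 <= 1 by rewrite sqr_ge0 /= expr_le1 //; lra.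
  move=> /andP [h1 h2]; nra.
apply: le_trans (_ : \sum_z ([exists c : F, z == c *: y])%:R * KK R y y <= _).
  apply: sum_in_le => [z _|z]; last by rewrite mulr_ge0 ?K_ge0.
  case: (classify z ny) => [[c [c0 ->]]|[[w [wy wz]]|[w [wy wz]]]].
  - have -> : [exists c0, c *: y == c0 *: y] by apply/existsP; exists c.
    by rewrite mul1r K_scale.
  - by rewrite (K_sep1 R wy wz) mulr_ge0 ?K_ge0.
  - by rewrite (K_sep2 R wy wz) mulr_ge0 ?K_ge0.
rewrite -mulr_suml.
apply: le_trans (_ : #|F|%:R * KK R y y <= _); last exact: Kyy_bound.
apply: ler_wpM2r; first exact: K_ge0.
apply: le_trans (_ : \sum_z \sum_(c : F) ((z == c *: y)%:R : R) <= _).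
  by apply: ler_sum => z _; exact: exists_le_sum.
rewrite exchange_big /= (eq_bigr (fun _ => 1)); first by rewrite sumr_const; apply: lexx.
move=> c _; rewrite (bigD1 (c *: y)) //= eqxx big1 ?addr0 // => z /negbTE -> //.
Qed.

Lemma spectral (R : rcfType) (F : finFieldType) d (E : {set 'rV[F]_d}) :
  \sum_x (\sum_(y in E) aa R x y) ^+ 2 <= #|E|%:R * (#|F|%:R : R) ^+ d.
Proof.
have -> : \sum_x (\sum_(y in E) aa R x y) ^+ 2 = \sum_(y in E) \sum_(z in E) KK R y z.
  rewrite /KK (eq_bigr (fun x => \sum_(y in E) \sum_(z in E) aa R x y * aa R x z)); last first.
    by move=> x _; rewrite expr2 big_distrlr.
  rewrite exchange_big /=; apply: eq_bigr => y _; exact: exchange_big.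
apply: le_trans (_ : \sum_(y in E) (#|F|%:R : R) ^+ d <= _).
  by apply: ler_sum => y _; exact: row_bound.
by rewrite sumr_const mulr_natl; apply: lexx.
Qed.

Lemma sqrtq_ge1 (R : rcfType) (F : finFieldType) : 1 <= Num.sqrt (#|F|%:R : R).
Proof. by rewrite -[X in X <= _]sqrtr1 ler_sqrt ?ler0n // q_ge1. Qed.

Lemma moment (R : rcfType) (F : finFieldType) d (E : {set 'rV[F]_d}) :
  \sum_(x in E) `|#|[set y in E | Defs.orthov x y & y != x]|%:R - #|E|%:R / (#|F|%:R : R)|
    <= 2 * Num.sqrt (#|F|%:R : R) ^+ d * #|E|%:R.
Proof.
set mu := Num.sqrt (#|F|%:R : R) ^+ d.
set s := (#|E|%:R : R).
have mu1 : 1 <= mu by apply: exprn_ege1; exact: sqrtq_ge1.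
have mu2 : mu ^+ 2 = (#|F|%:R : R) ^+ d.
  by rewrite /mu -exprAC sqr_sqrtr // ler0n.
set g := fun x => \sum_(y in E) aa R x y.
have cardE : forall x, (#|[set y in E | Defs.orthov x y]|%:R : R) = \sum_(y in E) (Defs.orthov x y)%:R.
  move=> x; rewrite (eq_bigr (fun y => if Defs.orthov x y then 1 else 0)); last first.
    by move=> y _; case: (Defs.orthov x y).
  rewrite -big_mkcondr /= sumr_const.
  congr (_ *+ _); apply: eq_card => y; by rewrite inE.
have fg : forall x, `|#|[set y in E | Defs.orthov x y & y != x]|%:R - s / #|F|%:R| <= `|g x| + 1.
  move=> x.
  have -> : [set y in E | Defs.orthov x y & y != x] = [set y in E | Defs.orthov x y] :\ x.
    by apply/setP => y; rewrite !inE; case: (y == x); rewrite ?andbF ?andbT.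
  have e : (#|[set y in E | Defs.orthov x y] :\ x|%:R : R) =
     #|[set y in E | Defs.orthov x y]|%:R - (x \in [set y in E | Defs.orthov x y])%:R.
    by rewrite (cardsD1 x [set y in E | Defs.orthov x y]) natrD; ring.
  have -> : (#|[set y in E | Defs.orthov x y] :\ x|%:R : R) - s / #|F|%:R =
      g x - (x \in [set y in E | Defs.orthov x y])%:R.
    rewrite e cardE /g /aa sumrB sumr_const /s -mulr_natl; ring.
  apply: le_trans (ler_normB _ _) _; apply: lerD => //.
  by case: (_ \in _); rewrite ?normr1 ?normr0 ?ler01.
have sg : \sum_(x in E) `|g x| <= mu * s.
  have mu0 : 0 < mu by apply: lt_le_trans mu1.
  have h : \sum_(x in E) (2 * mu) * `|g x| <= \sum_(x in E) (g x ^+ 2 + mu ^+ 2).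
    apply: ler_sum => x _.
    have h0 := sqr_ge0 (`|g x| - mu).
    have e : `|g x| ^+ 2 = g x ^+ 2 by rewrite real_normK ?num_real.
    move: h0 e; move: (`|g x|) (g x) => a b; rewrite !expr2 => h0 e.
    nra.
  move: h; rewrite -mulr_sumr big_split /= sumr_const -/s => h.
  have h2 : \sum_(x in E) g x ^+ 2 <= s * mu ^+ 2.
    apply: le_trans (_ : \sum_x g x ^+ 2 <= _).
      by apply: sum_in_le => [z _|z]; [apply: lexx | exact: sqr_ge0].
    by rewrite mu2; exact: spectral.
  have s0 : 0 <= s by rewrite ler0n.
  move: h h2; rewrite -mulr_natl; move: (\sum_(x in E) `|g x|) (\sum_(x in E) g x ^+ 2) => A B h h2.
  nra.
apply: le_trans (_ : \sum_(x in E) (`|g x| + 1) <= _); first by apply: ler_sum => x _; exact: fg.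
rewrite big_split /= sumr_const -/s -mulr_natl mulr1.
have s0 : 0 <= s by rewrite ler0n.
nra.
Qed.

Local Close Scope ring_scope.

Definition Valid (F : finFieldType) d (E : {set 'rV[F]_d}) (k : nat) :=
  [set S : {set 'rV[F]_d} | [&& S \subset E, #|S| == k &
      [forall x in S, forall y in S, (x != y) ==> Defs.orthov x y]]].

Lemma numE (F : finFieldType) d (E : {set 'rV[F]_d}) k : num_orth_ktuples E k = #|Valid E k|.
Proof. by []. Qed.

Lemma orthovC (F : finFieldType) d (x y : 'rV[F]_d) : Defs.orthov x y = Defs.orthov y x.
Proof. by rewrite /Defs.orthov dotvC. Qed.

Lemma num0 (F : finFieldType) d (E : {set 'rV[F]_d}) : num_orth_ktuples E 0 = 1%N.
Proof.
rewrite numE (_ : Valid E 0 = [set set0]) ?cards1 //.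
apply/setP => S; rewrite !inE; apply/idP/idP.
  by case/and3P => _ /eqP /cards0_eq ->.
move/eqP ->; rewrite sub0set cards0 eqxx /=.
by apply/forallP => x; rewrite inE.
Qed.

Lemma orthP (F : finFieldType) d (S : {set 'rV[F]_d}) x y :
  [forall x in S, forall y in S, (x != y) ==> Defs.orthov x y] ->
  x \in S -> y \in S -> x != y -> Defs.orthov x y.
Proof. by move=> /forall_inP H xS yS; move/forall_inP: (H x xS) => H'; apply/implyP/H'. Qed.

Lemma card_sep (T : finType) (A : {set T}) (P : pred T) :
  #|[set a in A | P a]| = (\sum_(a in A) P a)%N.
Proof.
rewrite -sum1_card big_mkcond [RHS]big_mkcond /=; apply: eq_bigr => a _.
by rewrite inE; case: (a \in A); case: (P a).
Qed.

Lemma step_card (F : finFieldType) d (E : {set 'rV[F]_d}) m x : x \in E ->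
  #|Valid [set y in E | Defs.orthov x y & y != x] m| = #|[set S in Valid E m.+1 | x \in S]|.
Proof.
move=> xE; set E' := [set y in E | Defs.orthov x y & y != x].
have xnE' : x \notin E' by rewrite inE eqxx !andbF.
have -> : [set S in Valid E m.+1 | x \in S] = (fun S => x |: S) @: Valid E' m.
  apply/setP => S; rewrite !inE; apply/idP/idP.
    case/andP => /and3P [SE /eqP cS orS] xS.
    apply/imsetP; exists (S :\ x); last by rewrite setD1K.
    rewrite inE; apply/and3P; split.
    - apply/subsetP => y; rewrite !inE => /andP [yx yS].
      rewrite (subsetP SE) // yx andbT /=.
      by apply: (orthP orS xS yS); rewrite eq_sym.
    - by move: cS; rewrite (cardsD1 x S) xS add1n => -[->].
    - apply/forall_inP => a; rewrite inE => /andP [_ aS]; apply/forall_inP => b.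
      by rewrite inE => /andP [_ bS]; apply/implyP; apply: (orthP orS aS bS).
  case/imsetP => S' /[!inE] /and3P [S'E /eqP cS' orS'] ->.
  rewrite setU11 andbT; apply/and3P; split.
  - rewrite subUset sub1set xE /=; apply: subset_trans S'E _.
    by apply/subsetP => y; rewrite inE => /andP [].
  - have xS' : x \notin S' by apply: contra xnE'; apply: (subsetP S'E).
    by rewrite cardsU1 xS' cS'.
  - apply/forallP => a; apply/implyP; rewrite !inE => /orP [/eqP ->|aS];
    apply/forallP => b; apply/implyP; rewrite !inE => /orP [/eqP ->|bS].
    + by rewrite eqxx.
    + by have := subsetP S'E b bS; rewrite !inE => /and3P [_ -> _]; rewrite implybT.
    + by have := subsetP S'E a aS; rewrite !inE orthovC => /and3P [_ -> _]; rewrite implybT.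
    + by apply/implyP; apply: (orthP orS' aS bS).
rewrite card_in_imset // => S1 S2 /[!inE] /and3P [S1E _ _] /and3P [S2E _ _] e.
have x1 : x \notin S1 by apply: contra xnE'; apply: (subsetP S1E).
have x2 : x \notin S2 by apply: contra xnE'; apply: (subsetP S2E).
by rewrite -(setU1K x1) -(setU1K x2) e.
Qed.

Lemma orth_rec (F : finFieldType) d (E : {set 'rV[F]_d}) m :
  (m.+1 * num_orth_ktuples E m.+1 =
   \sum_(x in E) num_orth_ktuples [set y in E | Defs.orthov x y & y != x] m)%N.
Proof.
rewrite (eq_bigr (fun x => #|[set S in Valid E m.+1 | x \in S]|)); last first.
  by move=> x xE; rewrite numE step_card.
rewrite (eq_bigr (fun x => \sum_(S in Valid E m.+1) (x \in S))%N); last first.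
  by move=> x _; rewrite card_sep.
rewrite exchange_big /= (eq_bigr (fun _ => m.+1)); last first.
  move=> S; rewrite inE => /and3P [SE /eqP cS _].
  rewrite -card_sep -cS; apply: eq_card => y; rewrite inE.
  by case yS: (y \in S); rewrite ?andbF // (subsetP SE).
by rewrite sum_nat_const mulnC.
Qed.

Local Open Scope ring_scope.

Lemma num1 (F : finFieldType) d (E : {set 'rV[F]_d}) : num_orth_ktuples E 1 = #|E|.
Proof.
have := orth_rec E 0; rewrite mul1n => ->.
by rewrite (eq_bigr (fun _ => 1%N)) ?sum1_card // => x _; rewrite num0.
Qed.

Lemma main_bound (R : rcfType) d (m : nat) : exists c : R, 0 <= c /\
  forall (F : finFieldType) (E : {set 'rV[F]_d}),
  `| (#|F|%:R : R) ^+ 'C(m.+1, 2) * (m.+1)`!%:R * (num_orth_ktuples E m.+1)%:R - #|E|%:R ^+ m.+1|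
    <= c * ((2 * Num.sqrt (#|F|%:R : R) ^+ d) * (#|F|%:R : R) ^+ m)
         * (#|E|%:R + (2 * Num.sqrt (#|F|%:R : R) ^+ d) * (#|F|%:R : R) ^+ m) ^+ m.
Proof.
elim: m => [|m [c [c0 IH]]].
  exists 0; split => // F E; rewrite num1 bin_small // expr0 mul1r (_ : 1`! = 1%N) // mul1r expr1 subrr normr0.
  by rewrite !mul0r.
exists (m.+1%:R + c * 2 ^+ m.+1); split.
  by rewrite addr_ge0 // mulr_ge0 // exprn_ge0.
move=> F E.
set q := (#|F|%:R : R); set La := 2 * Num.sqrt q ^+ d.
set E' := fun x => [set y in E | Defs.orthov x y & y != x].
have := @step R _ E q La c m (fun x => #|E' x|%:R)
   (fun x => q ^+ 'C(m.+1, 2) * (m.+1)`!%:R * (num_orth_ktuples (E' x) m.+1)%:R).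
have q1 : 1 <= q by exact: q_ge1.
have La0 : 0 <= La by rewrite /La mulr_ge0 // exprn_ge0 // sqrtr_ge0.
move=> /(_ q1 La0 c0) H.
have e : q ^+ m.+1 * \sum_(x in E) (q ^+ 'C(m.+1, 2) * (m.+1)`!%:R * (num_orth_ktuples (E' x) m.+1)%:R)
   = q ^+ 'C(m.+2, 2) * (m.+2)`!%:R * (num_orth_ktuples E m.+2)%:R.
  rewrite -mulr_sumr -natr_sum -orth_rec (binS m.+1 1) bin1 exprD (factS m.+1) !natrM; ring.
rewrite -e; apply: H.
- move=> x _; rewrite ler0n /= ler_nat; apply: subset_leq_card.
  by apply/subsetP => y; rewrite inE => /andP [].
- by rewrite /La; exact: moment.
- by move=> x _; exact: IH.
Qed.

Theorem theorem2 (R : rcfType) (d k : nat) :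
  (0 < k)%N -> (2 * k - 1 <= d)%N ->
  forall eps : R, 0 < eps ->
  exists (C : R) (Q : nat),
    forall (F : finFieldType) (E : {set 'rV[F]_d}),
      (Q <= #|F|)%N ->
      C * (Num.sqrt (#|F|%:R : R)) ^+ d * (#|F|%:R : R) ^+ (k - 1)
        <= (#|E|%:R : R) ->
      `| (num_orth_ktuples E k)%:R
           / ((#|E|%:R : R) ^+ k / (k`!)%:R / (#|F|%:R : R) ^+ 'C(k, 2))
         - 1 | <= eps.
Proof.
case: k => [//|m] _ _ eps eps0.
have [c [c0 Hc]] := main_bound R d m.
exists (2 + 2 * c * 2 ^+ m / eps), 0%N => F E _.
rewrite subSS subn0.
have := Hc F E.
set q := (#|F|%:R : R); set s := (#|E|%:R : R); set mu := Num.sqrt q ^+ d.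
set N := (num_orth_ktuples E m.+1)%:R.
set C2 := 'C(m.+1, 2); set L := 2 * mu * q ^+ m.
move=> HX h.
have q1 : 1 <= q by exact: q_ge1.
have mu1 : 1 <= mu by apply: exprn_ege1; exact: sqrtq_ge1.
have qm1 : 1 <= q ^+ m by exact: exprn_ege1.
have M1 : 1 <= mu * q ^+ m by rewrite -[1]mulr1 ler_pM.
have tm0 : 0 <= 2 ^+ m :> R by rewrite exprn_ge0.
have Cdef : eps * (2 + 2 * c * 2 ^+ m / eps) = 2 * eps + 2 * c * 2 ^+ m.
  by field; rewrite gt_eqF.
set C := 2 + 2 * c * 2 ^+ m / eps in h Cdef.
have C2le : 2 <= C by rewrite /C lerDl divr_ge0 // ?mulr_ge0 // ltW.
have h' : C * (mu * q ^+ m) <= s by rewrite mulrA.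
have s2 : 2 <= s.
  apply: le_trans h'; rewrite -[2]mulr1; apply: ler_pM => //; lra.
have s0 : 0 < s by lra.
have L0 : 0 <= L by rewrite /L; lra.
have CL : C * L <= 2 * s by rewrite /L; nra.
have Ls : L <= s by nra.
have cL : c * L * 2 ^+ m <= eps * s.
  have : eps * C * L <= 2 * eps * s by nra.
  rewrite Cdef; nra.
have fq : q ^+ C2 != 0 by rewrite expf_neq0 // gt_eqF // (lt_le_trans ltr01 q1).
have ff : (m.+1)`!%:R != 0 :> R by rewrite pnatr_eq0 -lt0n fact_gt0.
have -> : N / (s ^+ m.+1 / (m.+1)`!%:R / q ^+ C2) - 1
   = (q ^+ C2 * (m.+1)`!%:R * N - s ^+ m.+1) / s ^+ m.+1.
  by field; rewrite fq ff expf_neq0 // gt_eqF.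
have sm0 : 0 < s ^+ m.+1 by rewrite exprn_gt0.
rewrite normrM normfV (gtr0_norm sm0) ler_pdivrMr //.
apply: (le_trans HX).
have P : (s + L) ^+ m <= 2 ^+ m * s ^+ m.
  rewrite -exprMn; apply: lerXn2r; rewrite ?nnegrE; lra.
have P0 : 0 <= (s + L) ^+ m by rewrite exprn_ge0 //; lra.
rewrite -/L.
have cL0 : 0 <= c * L by rewrite mulr_ge0.
apply: le_trans (_ : c * L * (2 ^+ m * s ^+ m) <= _); first by apply: ler_wpM2l.
have sm : 0 <= s ^+ m by rewrite exprn_ge0 // ltW.
have -> : c * L * (2 ^+ m * s ^+ m) = (c * L * 2 ^+ m) * s ^+ m by ring.
have -> : eps * s ^+ m.+1 = (eps * s) * s ^+ m by rewrite exprS; ring.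
by apply: ler_wpM2r.
Qed.
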